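(* Let $R$ be a transit function on a non-empty finite set $V$ satisfying axioms $(b2)$ and $(b3)$. Then for any $u,v,w\in V$ there exists $x\in R(u,v)\cap R(u,w)$ such that $R(x,v)\cap R(x,w)=\{x\}$.
   Context: A transit function on $V$ is a map $R:V\times V\to 2^V$ with $(t1)$ $u\in R(u,v)$, $(t2)$ $R(u,v)=R(v,u)$, $(t3)$ $R(u,u)=\{u\}$ for all $u,v\in V$. $(b2)$: if $x\in R(u,v)$ and $y\in R(u,x)$ then $y\in R(u,v)$. $(b3)$: if $x\in R(u,v)$ and $y\in R(u,x)$ then $x\in R(y,v)$. *)

(* Defs.v *)
From mathcomp Require Import all_boot.
Set Implicit Arguments. Unset Strict Implicit. Unset Printing Implicit Defensive.

Definition transit_function (V : finType) (R : V -> V -> {set V}) : Prop :=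
  [/\ (forall u v : V, u \in R u v),
      (forall u v : V, R u v = R v u)
    & (forall u : V, R u u = [set u])].

Definition axiom_b2 (V : finType) (R : V -> V -> {set V}) : Prop :=
  forall u v x y : V, x \in R u v -> y \in R u x -> y \in R u v.

Definition axiom_b3 (V : finType) (R : V -> V -> {set V}) : Prop :=
  forall u v x y : V, x \in R u v -> y \in R u x -> x \in R y v.

(* Main.v *)
Require Import Defs.
From mathcomp Require Import all_boot.

Theorem lemma3 (V : finType) (R : V -> V -> {set V}) :
  0 < #|V| ->
  transit_function R -> axiom_b2 R -> axiom_b3 R ->
  forall u v w : V, exists x : V,
    x \in R u v :&: R u w /\ R x v :&: R x w = [set x].
Proof.
move=> _ [t1 t2 t3] b2 b3 u v w.
suff H : forall n x, #|R x v| <= n -> x \in R u v :&: R u w ->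
  exists x, x \in R u v :&: R u w /\ R x v :&: R x w = [set x].
  by apply: (H _ u (leqnn _)); rewrite inE !t1.
elim=> [|n IH] x Hn Hx.
  by move: Hn; rewrite leqn0 => /eqP/card0_eq/(_ x); rewrite t1.
case: (pickP [pred y | (y \in R x v :&: R x w) && (y != x)]) => [y /= /andP [Hy Hyx]|H0].
  move: Hy; rewrite inE => /andP [Hyv Hyw].
  move: Hx; rewrite inE => /andP [Hxv Hxw].
  apply: (IH y).
    rewrite -ltnS; apply: leq_trans Hn.
    apply: proper_card; apply/properP; split.
      apply/subsetP => z Hz; rewrite t2; apply: (b2 v x y z); first by rewrite t2.
      by rewrite -t2.
    exists x; first by rewrite t1.
    apply/negP; rewrite t2 => Hxy.
    have : y \in R x x by apply: (b3 v x y x); rewrite // t2.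
    by rewrite t3 inE (negbTE Hyx).
  rewrite inE; apply/andP; split.
    rewrite t2; apply: (b2 v u x y); rewrite t2 //.
  rewrite t2; apply: (b2 w u x y); rewrite t2 //.
exists x; split => //.
apply/setP => z; rewrite inE; move: (H0 z) => /=.
case: eqP => [->|_]; first by rewrite inE !t1.
by rewrite andbT => ->.
Qed.
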